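(* Let $p_1,p_2\in(0,1]$, $c_1,c_2\ge0$, $\beta<1$, $\delta_1,\delta_2\in(0,1)$. Define $R=\frac12$, $T_i=p_i+(1-p_i)\frac12-c_i$ for $i=1,2$, $S_1=(1-p_2)\frac12$, $S_2=(1-p_1)\frac12$, $Q_1=p_1p_2\frac12\beta+p_1(1-p_2)+(1-p_1)(1-p_2)\frac12-c_1$, $Q_2=p_1p_2\frac12\beta+p_2(1-p_1)+(1-p_1)(1-p_2)\frac12-c_2$. (Grim Trigger) $\frac{R}{1-\delta_i}\ge T_i+\frac{\delta_iQ_i}{1-\delta_i}$ for both $i=1,2$ if and only if \[\delta_1\ge\frac{p_1-2c_1}{(1-\beta)p_1p_2+p_2}\quad\text{and}\quad\delta_2\ge\frac{p_2-2c_2}{(1-\beta)p_1p_2+p_1}.\] (Tit-for-Tat) $\frac{R}{1-\delta_i}\ge T_i+\delta_iS_i+\frac{\delta_i^2}{1-\delta_i}R$ for both $i=1,2$ if and only if \[\delta_1\ge\frac{p_1-2c_1}{p_2}\quad\text{and}\quad\delta_2\ge\frac{p_2-2c_2}{p_1}.\]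
   Context: Model: two content providers in an infinitely repeated game choose each period to cooperate or attack (ranking manipulation). Player $i$'s attack succeeds with probability $p_i$ and costs $c_i$; $\beta$ is the market degradation factor when both attacks succeed; $\delta_i$ is player $i$'s discount factor. $R,T_i,S_i,Q_i$ are player $i$'s stage payoffs for mutual cooperation, lone attack, being attacked while cooperating, and mutual attack. Cooperation is sustainable when each player weakly prefers perpetual cooperation to deviating under the trigger strategy (grim trigger: permanent mutual defection after a deviation; Tit-for-Tat: one round of retaliation then cooperation). *)

(* Defs.v *)
From Stdlib Require Import Reals Lra.
Open Scope R_scope.

Definition Rpay : R := 1/2.
Definition T1 (p1 c1 : R) : R := p1 + (1 - p1) * (1/2) - c1.
Definition T2 (p2 c2 : R) : R := p2 + (1 - p2) * (1/2) - c2.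
Definition S1 (p2 : R) : R := (1 - p2) * (1/2).
Definition S2 (p1 : R) : R := (1 - p1) * (1/2).
Definition Q1 (p1 p2 beta c1 : R) : R :=
  p1 * p2 * (1/2) * beta + p1 * (1 - p2) + (1 - p1) * (1 - p2) * (1/2) - c1.
Definition Q2 (p1 p2 beta c2 : R) : R :=
  p1 * p2 * (1/2) * beta + p2 * (1 - p1) + (1 - p1) * (1 - p2) * (1/2) - c2.

Definition grim_ok (d T Q : R) : Prop :=
  Rpay / (1 - d) >= T + d * Q / (1 - d).
Definition tft_ok (d T S : R) : Prop :=
  Rpay / (1 - d) >= T + d * S + d ^ 2 / (1 - d) * Rpay.

(* Main.v *)
Require Import Defs.
From Stdlib Require Import Reals Lra.
Open Scope R_scope.

Lemma pos_div_ge (x y : R) : 0 < y -> (x / y >= 0 <-> x >= 0).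
Proof.
  intros Hy; split; intros H.
  - destruct (Rlt_or_le x 0) as [Hx|Hx]; [|lra].
    assert (x / y < 0). { unfold Rdiv. apply Rmult_neg_pos; [lra| apply Rinv_0_lt_compat; lra]. } lra.
  - apply Rle_ge; unfold Rdiv; apply Rmult_le_pos; [lra| left; apply Rinv_0_lt_compat; lra].
Qed.

Lemma ge_div (x a b : R) : 0 < b -> (x >= a / b <-> x * b >= a).
Proof.
  intros Hb.
  assert (E : x - a / b = (x * b - a) / b) by (field; lra).
  split; intros H.
  - assert (H1 : (x*b - a)/b >= 0) by (rewrite <- E; lra).
    apply pos_div_ge in H1; lra.
  - assert (H1 : (x*b - a)/b >= 0) by (apply pos_div_ge; lra).
    rewrite <- E in H1; lra.
Qed.

Lemma grim_iff d T Q : 0 < d < 1 ->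
  (grim_ok d T Q <-> d * (T - Q) >= T - 1/2).
Proof.
  intros Hd. unfold grim_ok, Rpay.
  assert (E : 1/2/(1-d) - (T + d*Q/(1-d)) = (d*(T-Q) - (T - 1/2))/(1-d)) by (field; lra).
  split; intros H.
  - assert (H1 : (d*(T-Q) - (T - 1/2))/(1-d) >= 0) by (rewrite <- E; lra).
    apply pos_div_ge in H1; lra.
  - assert (H1 : (d*(T-Q) - (T - 1/2))/(1-d) >= 0) by (apply pos_div_ge; lra).
    rewrite <- E in H1; lra.
Qed.

Lemma tft_iff d T S : 0 < d < 1 ->
  (tft_ok d T S <-> d * (1/2 - S) >= T - 1/2).
Proof.
  intros Hd. unfold tft_ok, Rpay.
  assert (E : 1/2/(1-d) - (T + d*S + d^2/(1-d)*(1/2)) = (d*(1/2-S) - (T - 1/2))).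
  { field; lra. }
  lra.
Qed.

Theorem theorem10 (p1 p2 c1 c2 beta d1 d2 : R)
  (hp1 : 0 < p1 <= 1) (hp2 : 0 < p2 <= 1)
  (hc1 : 0 <= c1) (hc2 : 0 <= c2) (hbeta : beta < 1)
  (hd1 : 0 < d1 < 1) (hd2 : 0 < d2 < 1) :
  ((grim_ok d1 (T1 p1 c1) (Q1 p1 p2 beta c1) /\
    grim_ok d2 (T2 p2 c2) (Q2 p1 p2 beta c2)) <->
   (d1 >= (p1 - 2 * c1) / ((1 - beta) * p1 * p2 + p2) /\
    d2 >= (p2 - 2 * c2) / ((1 - beta) * p1 * p2 + p1)))
  /\
  ((tft_ok d1 (T1 p1 c1) (S1 p2) /\ tft_ok d2 (T2 p2 c2) (S2 p1)) <->
   (d1 >= (p1 - 2 * c1) / p2 /\ d2 >= (p2 - 2 * c2) / p1)).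
Proof.
  assert (Hpp : 0 < (1 - beta) * p1 * p2).
  { apply Rmult_lt_0_compat; [apply Rmult_lt_0_compat|]; lra. }
  rewrite (grim_iff _ _ _ hd1), (grim_iff _ _ _ hd2),
    (tft_iff _ _ _ hd1), (tft_iff _ _ _ hd2),
    (ge_div d1) by lra.
  rewrite (ge_div d2) by lra.
  rewrite (ge_div d1) by lra.
  rewrite (ge_div d2) by lra.
  unfold T1, T2, Q1, Q2, S1, S2.
  split; split; intros [A B]; split; nra.
Qed.
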